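(* Let $K$ be any field with involution, and let $T=L_K(E_T)$ be the Toeplitz algebra, where $E_T$ is the graph with two vertices $u,v$, one loop at $v$, and one edge from $v$ to $u$. Then $T$ is not $*$-symmetric, and for every integer $n>1$ the ring $\mathbb M_n(T)$ (a Rickart ring, being the Leavitt path algebra of a graph with finitely many vertices) is not a Rickart $*$-ring.
   Context: $L_K(E_T)$ is generated by $u,v,c,f,c^*,f^*$ ($c$ the loop at $v$, $f$ the edge $v\to u$) subject to the Leavitt path algebra relations: $u,v$ orthogonal idempotents; $vc=cv=c$, $vf=fu=f$; $c^*v=vc^*=c^*$, $uf^*=f^*v=f^*$; $c^*c=v$, $f^*f=u$, $c^*f=f^*c=0$; $v=cc^*+ff^*$. It has identity $u+v$ and the involution $(\sum k_ipq^* )^*=\sum k_i^*qp^*$. A unital $*$-ring is $*$-symmetric if $1+xx^*$ is invertible for all $x$. $\mathbb M_n(T)$ carries the $*$-transpose involution $(a_{ij})^*=(a_{ji}^* )$. A Rickart $*$-ring is a $*$-ring in which the right annihilator of each element is generated by a projection ($p=p^2=p^*$); a Rickart ring is one in which left and right annihilators of each element are generated by idempotents. *)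

(* Defs.v *)
From HB Require Import structures.
From mathcomp Require Import all_boot all_order all_algebra.
Set Implicit Arguments. Unset Strict Implicit. Unset Printing Implicit Defensive.
Import GRing.Theory.
Local Open Scope ring_scope.

(* Defining relations of the Leavitt path algebra L_K(E_T) of the Toeplitz
   graph E_T (vertices u, v; loop c at v; edge f : v -> u), with ghost edges
   cs = c^*, fs = f^*, in an arbitrary ring A; plus unitality 1 = u + v. *)
Definition toeplitz_rels (A : pzRingType) (u v c f cs fs : A) : Prop :=
  [/\ [/\ u * u = u, v * v = v, u * v = 0 & v * u = 0],
      [/\ v * c = c, c * v = c, v * f = f & f * u = f],
      [/\ cs * v = cs, v * cs = cs, u * fs = fs & fs * v = fs],
      [/\ cs * c = v, fs * f = u, cs * f = 0 & fs * c = 0] &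
      v = c * cs + f * fs /\ 1 = u + v].

(* T (with the named elements) is the universal (unital) K-algebra generated
   by u,v,c,f,c^*,f^* subject to the relations: this characterizes
   L_K(E_T) up to isomorphism. *)
Definition toeplitz_universal (K : fieldType) (T : algType K)
    (u v c f cs fs : T) : Prop :=
  forall (A : algType K) (u' v' c' f' cs' fs' : A),
    toeplitz_rels u' v' c' f' cs' fs' ->
    (exists phi : {lrmorphism T -> A},
        [/\ phi u = u', phi v = v', phi c = c' & phi f = f'] /\
        phi cs = cs' /\ phi fs = fs') /\
    (forall phi psi : {lrmorphism T -> A},
        phi u = psi u -> phi v = psi v -> phi c = psi c -> phi f = psi f ->
        phi cs = psi cs -> phi fs = psi fs -> forall x, phi x = psi x).

Definition field_involution (K : fieldType) (conj : {rmorphism K -> K}) : Prop :=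
  involutive conj.

Definition star_algebra (K : fieldType) (conj : K -> K) (T : algType K)
    (star : T -> T) : Prop :=
  [/\ forall x y, star (x + y) = star x + star y,
      forall x y, star (x * y) = star y * star x,
      involutive star &
      forall (k : K) x, star (k *: x) = conj k *: star x].

Definition star_transpose (R : pzRingType) (n : nat) (star : R -> R)
    (M : 'M[R]_n) : 'M[R]_n :=
  \matrix_(i, j) star (M j i).

Definition star_symmetric (R : pzRingType) (star : R -> R) : Prop :=
  forall x : R, exists y : R,
    y * (1 + x * star x) = 1 /\ (1 + x * star x) * y = 1.

Definition is_projection (R : pzRingType) (star : R -> R) (p : R) : Prop :=
  p * p = p /\ star p = p.

Definition rickart_star_ring (R : pzRingType) (star : R -> R) : Prop :=
  forall x : R, exists p : R, is_projection star p /\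
    (forall y : R, x * y = 0 <-> exists z : R, y = p * z).

(* Main.v *)
Require Import Defs.
From HB Require Import structures.
From mathcomp Require Import all_boot all_order all_algebra.
From mathcomp Require Import ring.
Import GRing.Theory.
Local Open Scope ring_scope.

Section Mats.
Variable K : fieldType.
Definition Cm : 'M[K]_2 := \matrix_(i<2, j<2)
  (if (i == 0 :> nat) then (if (j == 0 :> nat) then 0 else -1) else (if (j == 0 :> nat) then 1 else -3%:R)).
Definition Dm : 'M[K]_2 := \matrix_(i<2, j<2)
  (if (i == 0 :> nat) then (if (j == 0 :> nat) then -3%:R else 1) else (if (j == 0 :> nat) then -1 else 0)).
Lemma CD : Cm * Dm = 1.
Proof.
apply/matrixP => i j; rewrite -mulmxE !mxE !big_ord_recr big_ord0 /= !mxE.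
case: i => [[|[|i]] Hi] //; case: j => [[|[|j]] Hj] //=; rewrite /=; ring.
Qed.
Lemma DC : Dm * Cm = 1.
Proof.
apply/matrixP => i j; rewrite -mulmxE !mxE !big_ord_recr big_ord0 /= !mxE.
case: i => [[|[|i]] Hi] //; case: j => [[|[|j]] Hj] //=; ring.
Qed.
Lemma CpD : Cm + Dm = - 3%:R.
Proof.
apply/matrixP => i j; rewrite !mxE.
case: i => [[|[|i]] Hi] //; case: j => [[|[|j]] Hj] //=; rewrite ?mulr1n ?mulr0n; ring.
Qed.

Lemma rels_M : toeplitz_rels (0 : 'M[K]_2) 1 Cm 0 Dm 0.
Proof.
split; split; rewrite ?mul0r ?mulr0 ?mul1r ?mulr1 ?addr0 ?add0r //.
all: try exact: DC; try exact: CD.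
by rewrite CD.
Qed.
End Mats.

Lemma key (K : fieldType) (T : algType K) (u v c f cs fs : T) (star : T -> T) :
  toeplitz_universal u v c f cs fs ->
  star (c + v) = cs + v ->
  forall y, y * (1 + (c + v) * star (c + v)) <> 1.
Proof.
move=> U hs y hy.
have [[phi [[_ hv hc _] [hcs _]]] _] := U _ _ _ _ _ _ _ (rels_M K).
have H : forall g : T -> 'M[K]_2, g 1 = 1 -> {morph g : a b / a * b} ->
    {morph g : a b / a + b} -> g v = 1 -> g c = Cm K -> g cs = Dm K -> False.
  move=> g g1 gM gD gv gc gcs.
  have := congr1 g hy.
  rewrite hs g1 gM gD g1 gM !gD gv gc gcs.
  have -> : 1 + (Cm K + 1) * (Dm K + 1) = 0.
    rewrite mulrDr !mulrDl CD !mul1r mulr1.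
    rewrite -!addrA (addrA (Dm K)) (addrC (Dm K)) CpD.
    by rewrite (addrC _ 1) !addrA -mulr2n -mulrSr subrr.
  by rewrite mulr0 => /esym/eqP; rewrite oner_eq0.
apply: (H phi) => //; [exact: rmorph1 | exact: rmorphM | exact: rmorphD].
Qed.

Theorem mainTheorem19 (K : fieldType) (conj : {rmorphism K -> K})
    (T : algType K) (u v c f cs fs : T) (star : T -> T) :
  field_involution conj ->
  toeplitz_rels u v c f cs fs ->
  toeplitz_universal u v c f cs fs ->
  star_algebra conj star ->
  star u = u -> star v = v -> star c = cs -> star f = fs ->
  ~ star_symmetric star /\
  (* every n > 1 is written m.+2 *)
  (forall m : nat, ~ rickart_star_ring (@star_transpose T m.+2 star)).
Proof.
move=> _ R U [sD sM sI sZ] su sv sc sf.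
have hs : star (c + v) = cs + v by rewrite sD sc sv.
have K0 := @key _ _ _ _ _ _ _ _ _ U hs.
split.
  move=> /(_ (c + v)) [y [hy _]]; exact: K0 hy.
move=> m /(_ (\matrix_(i, j) (if (i == 0 :> nat) then
        (if (j == 0 :> nat) then 1 else if (j == 1 :> nat) then star (c + v) else 0) else 0)))
  [P [[PP Ps] hP]].
pose i1 : 'I_m.+2 := Ordinal (isT : (1 < m.+2)%N).
set X := \matrix_(i, j) _ in hP.
have Li : lift ord0 ord0 = i1 :> 'I_m.+2 by apply: val_inj.
pose x := star (c + v).
pose Y : 'M[T]_m.+2 := \matrix_(i, j) (if (j == 0 :> nat) then
   (if (i == 0 :> nat) then - x else if (i == 1 :> nat) then 1 else 0) else 0).
have XY : X * Y = 0.
  apply/matrixP => i j; rewrite -mulmxE !mxE !big_ord_recl big1 /=.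
    rewrite !mxE /= /x; case: (i == 0 :> nat); case: (j == 0 :> nat) => /=;
      by rewrite ?mul0r ?mulr0 ?addr0 ?mul1r ?mulr1 ?addNr.
  move=> k _; rewrite /X /Y !mxE /=. by rewrite !if_same mul0r.
have [z hz] := (hP Y).1 XY.
have PY : P * Y = Y by rewrite hz mulrA PP.
have XP : X * P = 0 by apply/(hP P).2; exists 1; rewrite mulr1.
have e1 : P i1 0 * (- x) + P i1 i1 = 1.
  have := congr1 (fun M : 'M[T]_m.+2 => M i1 0) PY.
  rewrite /= -mulmxE !mxE !big_ord_recl big1 /=.
    by rewrite !mxE /= Li mulr1 addr0.
  by move=> k _; rewrite !mxE /= mulr0.
have e2 : P 0 i1 + x * P i1 i1 = 0.
  have := congr1 (fun M : 'M[T]_m.+2 => M 0 i1) XP.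
  rewrite /= -mulmxE !mxE !big_ord_recl big1 /=.
    by rewrite /X !mxE /= Li mul1r addr0 /x.
  by move=> k _; rewrite /X !mxE /= mul0r.
have ePs : forall i j, star (P j i) = P i j.
  by move=> i j; rewrite -[in RHS]Ps mxE.
have s0 : star 0 = 0.
  by move: (sD 0 0); rewrite addr0 => h; apply: (addrI (star 0)); rewrite addr0 -h.
have sN : forall a, star (- a) = - star a.
  by move=> a; apply: (addrI (star a)); rewrite -sD !subrr s0.
have e3 : P i1 0 = - (P i1 i1 * star x).
  rewrite -(ePs i1 0).
  have -> : P 0 i1 = - (x * P i1 i1) by apply/eqP; rewrite -subr_eq0 opprK e2.
  by rewrite sN sM ePs.
apply: (K0 (P i1 i1)).
by rewrite -[in RHS]e1 e3 mulNr mulrN opprK mulrDr mulr1 addrC /x sI mulrA.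
Qed.
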